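(* For every constant $c$ there exist $n$ and a node $\Gamma_n$ of covtree with $k=|\Gamma_n|$ such that $\Gamma_n$ has no witness of size at most $n+k+c$.
   Context: Posets are finite; an unlabelled poset is an isomorphism class. A downset of $Q$ is a subset closed downward. $D_n(Q)$ denotes the set of downsets of $Q$ of size $n$ up to isomorphism. For a set $\Gamma_n$ of distinct unlabelled posets each of size $n$, a poset $Q$ is a witness of $\Gamma_n$ if $D_n(Q)=\Gamma_n$. A node of covtree (at level $n$) is a set $\Gamma_n$ of unlabelled posets of size $n$ that has at least one witness. *)

(* Defs.v *)
From mathcomp Require Import all_boot.
Set Implicit Arguments. Unset Strict Implicit. Unset Printing Implicit Defensive.

Record fposet := FPoset {
  pcard : nat;
  ple : rel 'I_pcard;
  ple_refl : reflexive ple;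
  ple_anti : antisymmetric ple;
  ple_trans : transitive ple }.

(* Order isomorphism: two labelled posets represent the same unlabelled poset. *)
Definition poset_iso (P Q : fposet) : Prop :=
  exists f : 'I_(pcard P) -> 'I_(pcard Q),
    bijective f /\ forall x y, @ple P x y = @ple Q (f x) (f y).

Definition is_downset (Q : fposet) (D : {set 'I_(pcard Q)}) : Prop :=
  forall x y, @ple Q y x -> x \in D -> y \in D.

Definition iso_to_sub (P Q : fposet) (D : {set 'I_(pcard Q)}) : Prop :=
  exists f : 'I_(pcard P) -> 'I_(pcard Q),
    [/\ injective f,
        (forall y, y \in D <-> exists x, f x = y) &
        forall x y, @ple P x y = @ple Q (f x) (f y)].

(* Gamma : 'I_k -> fposet lists representatives of k distinct unlabelled
   posets.  Q is a witness of Gamma at level n: D_n(Q) = Gamma, i.e. every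
   downset of Q of size n is isomorphic to some Gamma i, and every Gamma i is
   isomorphic to some downset of Q. *)
Definition witness (n k : nat) (Gamma : 'I_k -> fposet) (Q : fposet) : Prop :=
  (forall D : {set 'I_(pcard Q)}, is_downset D -> #|D| = n ->
      exists i, iso_to_sub (Gamma i) D) /\
  (forall i, exists D : {set 'I_(pcard Q)}, is_downset D /\ iso_to_sub (Gamma i) D).

Definition covtree_node (n k : nat) (Gamma : 'I_k -> fposet) : Prop :=
  [/\ (forall i, pcard (Gamma i) = n),
      (forall i j, poset_iso (Gamma i) (Gamma j) -> i = j) &
      exists Q, witness n Gamma Q].

(* Main.v *)
Require Import Defs.
From mathcomp Require Import all_boot zify.
Set Implicit Arguments. Unset Strict Implicit. Unset Printing Implicit Defensive.

Lemma card_int N l h : h <= N -> #|[set y : 'I_N | l <= y < h]| = h - l.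
Proof.
elim: h => [|h IH] hN.
  apply/eqP; rewrite cards_eq0; apply/eqP/setP => y; rewrite !inE; lia.
have hN' : h < N by lia.
case: (leqP l h) => lh.
  have -> : [set y : 'I_N | l <= y < h.+1] = Ordinal hN' |: [set y : 'I_N | l <= y < h].
    apply/setP => y; rewrite !inE -val_eqE /=; lia.
  rewrite cardsU1 inE /= IH; [lia|lia].
have -> : [set y : 'I_N | l <= y < h.+1] = [set y : 'I_N | l <= y < h].
  apply/setP => y; rewrite !inE; lia.
rewrite IH; lia.
Qed.

Lemma card_lt N h : h <= N -> #|[set y : 'I_N | y < h]| = h.
Proof.
move=> hN; rewrite -[h in RHS]subn0 -(card_int 0 hN).
by apply: eq_card => y; rewrite !inE.
Qed.

Lemma dc_char N l (S : {set 'I_N}) :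
  (forall x : 'I_N, x \in S -> l <= x) ->
  (forall x y : 'I_N, l <= y -> y <= x -> x \in S -> y \in S) ->
  forall x : 'I_N, (x \in S) = (l <= x < l + #|S|).
Proof.
move=> Hl Hd x; apply/idP/idP => [xS|/andP[lx]].
  have sub : [set y : 'I_N | l <= y < x.+1] \subset S.
    apply/subsetP => y; rewrite inE => /andP[ly yx]; apply: (Hd x) => //; lia.
  have := subset_leq_card sub; rewrite card_int; last by apply: ltn_ord.
  have := Hl x xS; move=> h1 h2; set s := #|S| in h2 *; lia.
apply: contraLR => xS.
have sub : S \subset [set y : 'I_N | l <= y < x].
  apply/subsetP => y yS; rewrite inE Hl //=; rewrite ltnNge; apply/negP => xy.
  by move/negP: xS; apply; apply: (Hd y).
have := subset_leq_card sub; rewrite card_int; last by have := ltn_ord x; lia.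
lia.
Qed.

Definition glen N a (y : bool) (i j : nat) : bool :=
  (i == j) || ((i < j) && ((j < a) || ((a <= i) && ~~ [&& y, j == N.-1 & i == N.-2]))).

Lemma glen_refl N a y : reflexive (fun i j : 'I_N => glen N a y i j).
Proof. move=> i; rewrite /glen eqxx //. Qed.

Lemma glen_anti N a y : antisymmetric (fun i j : 'I_N => glen N a y i j).
Proof. move=> i j /=; rewrite /glen => H; apply/val_inj => /=; lia. Qed.

Lemma glen_trans N a y : transitive (fun i j : 'I_N => glen N a y i j).
Proof. move=> j i k /=; rewrite /glen => H1 H2; have := ltn_ord k; lia. Qed.

Definition G N a y : fposet := @FPoset N _ (@glen_refl N a y) (@glen_anti N a y) (@glen_trans N a y).

Lemma glen_le N a y i j : glen N a y i j -> i <= j.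
Proof. rewrite /glen; lia. Qed.

Lemma iso_G N a y M b z (PD : nat -> bool) (D : {set 'I_M}) (g h : nat -> nat) :
  (forall w : 'I_M, (w \in D) = PD w) ->
  (forall x, x < N -> [/\ g x < M, PD (g x) & h (g x) = x]) ->
  (forall w, w < M -> PD w -> h w < N /\ g (h w) = w) ->
  (forall x x', x < N -> x' < N -> glen N a y x x' = glen M b z (g x) (g x')) ->
  @iso_to_sub (G N a y) (G M b z) D.
Proof.
move=> HD Hg Hh Hle.
have gM : forall x : 'I_N, g x < M by move=> x; case: (Hg x (ltn_ord x)).
exists (fun x : 'I_N => Ordinal (gM x)); split.
- move=> x x' /(congr1 val) /= E; apply: val_inj.
  move: (Hg x (ltn_ord x)) (Hg x' (ltn_ord x')) => [_ _ h1] [_ _ h2].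
  by rewrite /= -h1 -h2 E.
- move=> w; rewrite HD; split => [Pw | [x <-] /=].
    case: (Hh w (ltn_ord w) Pw) => hN ghw.
    by exists (Ordinal hN); apply/val_inj.
  by case: (Hg x (ltn_ord x)).
- by move=> x x' /=; apply: Hle.
Qed.

Lemma downset_PD M b z (PD : nat -> bool) :
  (forall x w, w < M -> x < M -> glen M b z w x -> PD x -> PD w) ->
  @is_downset (G M b z) [set w : 'I_M | PD w].
Proof. move=> H x w /= le; rewrite !inE; apply: H => //. Qed.

Definition cmpc (P : fposet) (x : 'I_(pcard P)) :=
  #|[set y | @ple P x y || @ple P y x]|.

Lemma iso_cmpc (P Q : fposet) (f : 'I_(pcard P) -> 'I_(pcard Q)) :
  bijective f -> (forall x y, @ple P x y = @ple Q (f x) (f y)) ->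
  forall x, cmpc x = cmpc (f x).
Proof.
move=> bf Hf x; rewrite /cmpc -(card_imset _ (bij_inj bf)).
apply: eq_card => z; case: bf => g fg gf.
apply/imsetP/idP => [[y]|]; rewrite !inE.
  by move=> H ->; rewrite -!Hf.
by move=> H; exists (g z); rewrite ?inE ?Hf gf.
Qed.

Lemma cmpc_T N a y (x : 'I_N) : y = false -> a <= N ->
  @cmpc (G N a y) x = if x < a then a else N - a.
Proof.
move=> -> aN; rewrite /cmpc /=; case: ifP => xa.
  apply: etrans (card_lt aN); apply: eq_card => z; rewrite !inE /glen.
  have := ltn_ord z; lia.
apply: etrans (card_int a (leqnn N)); apply: eq_card => z; rewrite !inE /glen.
have := ltn_ord z; lia.
Qed.

Lemma noleast N a y (x0 : 'I_N) : 1 <= a < N -> ~ (forall w : 'I_N, glen N a y x0 w).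
Proof.
move=> aN H.
have z0 : 0 < N by lia.
have zl : N.-1 < N by lia.
have := H (Ordinal z0); have := H (Ordinal zl); rewrite /glen /=; lia.
Qed.

Section Constr.
Variable p : nat.
Hypothesis p1 : 1 <= p.
Definition nn := (2 * p).+2.
Definition mm := (2 * p).+1.
Definition NQ := (4 * p + 1).+1.
Definition QQ := G NQ mm true.
Definition ga (i : nat) := if i < p.+1 then nn - i.+1 else 1.
Definition Gam (i : 'I_(p.+2)) : fposet := G nn (ga i) (p.+1 <= i).

Ltac splitifs := repeat match goal with
  |- context[if ?b then _ else _] =>
     lazymatch b with context[if _ then _ else _] => fail | _ =>
     let E := fresh "E" in destruct b eqn:E end end.
Ltac crush := unfold glen, nn, mm, NQ, ga in *; simpl in *; splitifs; unfold nn, mm, NQ in *; lia.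

Lemma realize (i : 'I_(p.+2)) :
  exists D : {set 'I_(pcard QQ)}, is_downset D /\ iso_to_sub (Gam i) D.
Proof.
have ip := ltn_ord i.
rewrite /Gam /ga; case: ifP => ilt.
  pose s := i.+1.
  pose PD := fun w => (w < nn - s) || ((mm <= w) && (w < mm + s)).
  exists [set w : 'I_NQ | PD w]; split.
    apply: downset_PD => x w wM xM; rewrite /PD /s; crush.
  apply: (@iso_G _ _ _ _ _ _ PD _ (fun x => if x < nn - s then x else x + s - 1)
          (fun w => if w < mm then w else w + 1 - s)).
  - by move=> w; rewrite inE.
  - move=> x xn; rewrite /PD /s; split; crush.
  - move=> w wM; rewrite /PD /s; crush.
  - move=> x x' xn xn'; rewrite /s; crush.
have ie : nat_of_ord i = p.+1 by lia.
rewrite ie leqnn.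
pose PD := fun w => (w == 0) || (mm <= w).
exists [set w : 'I_NQ | PD w]; split.
  apply: downset_PD => x w wM xM; rewrite /PD; crush.
apply: (@iso_G _ _ _ _ _ _ PD _ (fun x => if x == 0 then 0 else x + mm - 1)
        (fun w => if w < mm then 0 else w + 1 - mm)).
- by move=> w; rewrite inE.
- move=> x xn; rewrite /PD; split; crush.
  - move=> w wM; rewrite /PD; crush.
- move=> x x' xn xn'; crush.
Qed.

Lemma classify (D : {set 'I_NQ}) :
  @is_downset QQ D -> #|D| = nn -> exists i, @iso_to_sub (Gam i) QQ D.
Proof.
move=> Dd Dn.
pose SA := D :&: [set w : 'I_NQ | w < mm].
pose SB := D :&: [set w : 'I_NQ | mm <= w < NQ.-1].
have vlt : NQ.-1 < NQ by rewrite /NQ.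
pose v := Ordinal vlt.
pose a := #|SA|. pose b := #|SB|. pose vin := v \in D.
have hA : forall w : 'I_NQ, (w \in SA) = (0 <= w < 0 + a).
  apply: dc_char => // x y _ yx; rewrite !inE => /andP[xD xm].
  apply/andP; split; last by lia.
  apply: (Dd x) => //=; crush.
have hB : forall w : 'I_NQ, (w \in SB) = (mm <= w < mm + b).
  apply: dc_char => [x|x y my yx]; rewrite !inE; first by case/andP => _ /andP[].
  case/andP=> xD /andP[mx xN]; apply/andP; split; last by lia.
  apply: (Dd x) => //=; crush.
have aB : a <= mm.
  have := subset_leq_card (subsetIr D [set w : 'I_NQ | w < mm]).
  rewrite -/SA -/a card_lt; [lia | rewrite /mm /NQ; lia].
have bB : b <= 2 * p.
  have := subset_leq_card (subsetIr D [set w : 'I_NQ | mm <= w < NQ.-1]).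
  rewrite -/SB -/b card_int; [rewrite /mm /NQ; lia | rewrite /NQ; lia].
have charD : forall w : 'I_NQ, (w \in D) =
    [|| w < a, (mm <= w < mm + b) | vin && (val w == NQ.-1)].
  move=> w; have := hA w; have := hB w; rewrite !inE.
  have wlt := ltn_ord w.
  case: (boolP (val w == NQ.-1)) => wv.
    have -> : w = v by apply/val_inj; apply/eqP.
    rewrite /vin; case: (v \in D) => /=; rewrite /mm /NQ /= in aB bB *; lia.
  case: (w \in D) => /=; rewrite /mm /NQ /= in aB bB wv wlt *; lia.
have cardD : #|D| = a + b + vin.
  rewrite -(cardsID [set w : 'I_NQ | w < mm] D) -/SA -/a -addnA; congr (_ + _).
  rewrite -(cardsID [set w : 'I_NQ | w < NQ.-1] (D :\: _)).
  have -> : (D :\: [set w : 'I_NQ | w < mm]) :&: [set w : 'I_NQ | w < NQ.-1] = SB.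
    by apply/setP => w; rewrite !inE; case: (w \in D) => /=; lia.
  congr (_ + _).
  have -> : (D :\: [set w : 'I_NQ | w < mm]) :\: [set w : 'I_NQ | w < NQ.-1] =
            if vin then [set v] else set0.
    apply/setP => w; rewrite !inE charD; case: vin charD => _; rewrite ?inE -?val_eqE /=;
    have := ltn_ord w; rewrite /mm /NQ /= in aB bB *; lia.
  by case: vin charD => _; rewrite ?cards1 ?cards0.
rewrite Dn in cardD.
pose PD := fun w : nat => [|| w < a, (mm <= w < mm + b) | vin && (w == NQ.-1)].
have HD : forall w : 'I_NQ, (w \in D) = PD w by [].
case vE: vin cardD => cardD.
  have bL : 2 * p - 1 <= b.
    have wlt : 4 * p - 1 < NQ by rewrite /NQ; lia.
    have : Ordinal wlt \in SB.
      rewrite !inE /=; apply/andP; split; last by rewrite /mm /NQ; lia.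
      by apply: (Dd v) => //=; crush.
    by rewrite hB /=; rewrite /mm; lia.
  have [bE|bE] : b = 2 * p \/ b = 2 * p - 1 by rewrite /nn in cardD; lia.
    have ilt : p.+1 < p.+2 by [].
    exists (Ordinal ilt); rewrite /Gam.
    apply: (@iso_G _ _ _ _ _ _ PD D (fun x => if x == 0 then 0 else x + mm - 1) (fun w => if w < mm then 0 else w + 1 - mm) HD).
    - move=> x xn; rewrite /PD; split; crush.
    - move=> w wM; rewrite /PD; crush.
    - move=> x x' xn xn'; crush.
  have ilt : 1 < p.+2 by [].
  exists (Ordinal ilt); rewrite /Gam.
  apply: (@iso_G _ _ _ _ _ _ PD D
     (fun x => if x < 2 * p - 1 then x + mm else if x == 2 * p - 1 then NQ.-1 else x - 2 * p)
     (fun w => if w < mm then w + 2 * p else if w == NQ.-1 then 2 * p - 1 else w - mm) HD).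
  - move=> x xn; rewrite /PD; split; crush.
  - move=> w wM; rewrite /PD; crush.
  - move=> x x' xn xn'; crush.
have bpos : 1 <= b by rewrite /nn /mm in cardD aB; lia.
case: (leqP b p.+1) => bp.
  have ilt : b.-1 < p.+2 by lia.
  exists (Ordinal ilt); rewrite /Gam.
  apply: (@iso_G _ _ _ _ _ _ PD D (fun x => if x < nn - b then x else x + b - 1) (fun w => if w < mm then w else w + 1 - b) HD).
  - move=> x xn; rewrite /PD; split; crush.
  - move=> w wM; rewrite /PD; crush.
  - move=> x x' xn xn'; crush.
have ilt : a.-1 < p.+2 by rewrite /nn in cardD; lia.
exists (Ordinal ilt); rewrite /Gam.
apply: (@iso_G _ _ _ _ _ _ PD D (fun x => if x < b then x + mm else x - b) (fun w => if w < mm then w + b else w - mm) HD).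
- move=> x xn; rewrite /PD; split; crush.
- move=> w wM; rewrite /PD; crush.
- move=> x x' xn xn'; crush.
Qed.

Lemma cmpcY0 (x : 'I_nn) : val x = 0 -> @cmpc (G nn 1 true) x = 1.
Proof.
move=> x0; rewrite /cmpc /=; apply: etrans (@card_lt nn 1 _); last by rewrite /nn.
apply: eq_card => z; rewrite !inE; have := ltn_ord z; crush.
Qed.

Lemma cmpcYv (x : 'I_nn) : val x = nn.-1 -> @cmpc (G nn 1 true) x = nn - 2.
Proof.
move=> xv; rewrite /cmpc /=.
have -> : [set y : 'I_nn | glen nn 1 true x y || glen nn 1 true y x] =
   [set y : 'I_nn | 1 <= y < nn - 2] :|: [set y : 'I_nn | nn.-1 <= y < nn].
  apply/setP => z; rewrite !inE; have := ltn_ord z; crush.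
rewrite cardsU !card_int; try (rewrite /nn; lia).
have -> : [set y : 'I_nn | 1 <= y < nn - 2] :&: [set y : 'I_nn | nn.-1 <= y < nn] = set0.
  apply/setP => z; rewrite !inE; crush.
rewrite cards0 /nn; lia.
Qed.

Lemma distinct (i j : 'I_(p.+2)) : poset_iso (Gam i) (Gam j) -> i = j.
Proof.
case=> f [bf Hf].
have cf := iso_cmpc bf Hf.
have [g fg gf] := bf.
have cg : forall y, cmpc (g y) = cmpc y by move=> y; rewrite cf gf.
have ip := ltn_ord i; have jp := ltn_ord j.
have vlt : nn.-1 < nn by rewrite /nn.
pose v := Ordinal vlt.
have zlt : 0 < nn by rewrite /nn.
pose z := Ordinal zlt.
have Ti : forall (k : 'I_(p.+2)) (x : 'I_nn), k < p.+1 ->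
    @cmpc (Gam k) x = if x < nn - k.+1 then nn - k.+1 else k.+1.
  move=> k x kp; rewrite /Gam /ga kp cmpc_T; last by rewrite /nn; lia.
    by case: ifP => _ //; rewrite /nn; lia.
  by apply/negbTE; rewrite -ltnNge.
have Y0 : forall (k : 'I_(p.+2)) (x : 'I_nn), ~~ (k < p.+1) -> val x = 0 -> @cmpc (Gam k) x = 1.
  move=> k x kp x0; rewrite /Gam /ga (negbTE kp) (_ : p.+1 <= k = true); last by lia.
  exact: cmpcY0.
have Yv : forall (k : 'I_(p.+2)) (x : 'I_nn), ~~ (k < p.+1) -> val x = nn.-1 -> @cmpc (Gam k) x = nn - 2.
  move=> k x kp x0; rewrite /Gam /ga (negbTE kp) (_ : p.+1 <= k = true); last by lia.
  exact: cmpcYv.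
case: (boolP (i < p.+1)) => ipl; case: (boolP (j < p.+1)) => jpl.
- have := cf v; rewrite !Ti //; have := ltn_ord (f v).
  case: ifP => _; case: ifP => _; rewrite /= /nn => *; apply/val_inj => /=; lia.
- exfalso; move: (cg z) (cg v).
  rewrite !(Ti i) // (Y0 j) // (Yv j) //.
  case: ifP => _; case: ifP => _; rewrite /nn /=; lia.
- exfalso; move: (cf z) (cf v).
  rewrite !(Ti j) // (Y0 i) // (Yv i) //.
  case: ifP => _; case: ifP => _; rewrite /nn /=; lia.
- apply/val_inj => /=; lia.
Qed.

Lemma lower (Q : fposet) : witness nn Gam Q -> 2 * mm <= pcard Q.
Proof.
case=> H1 H2.
have i0lt : 0 < p.+2 by [].
have iYlt : p.+1 < p.+2 by [].
have [D1 [Dd1 [f1 [inj1 img1 ord1']]]] := H2 (Ordinal i0lt).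
have [D2 [Dd2 [f2 [inj2 img2 ord2']]]] := H2 (Ordinal iYlt).
pose g1 : 'I_nn -> 'I_(pcard Q) := f1.
pose g2 : 'I_nn -> 'I_(pcard Q) := f2.
have ord1 : forall x y : 'I_nn, glen nn mm false x y = @ple Q (g1 x) (g1 y).
  move=> x y; rewrite /g1 -ord1' /= /ga /=; congr glen.
have ord2 : forall x y : 'I_nn, glen nn 1 true x y = @ple Q (g2 x) (g2 y).
  move=> x y; rewrite /g2 -ord2' /= /ga /= ltnn leqnn //.
have img1' : forall y, (y \in D1) <-> exists x : 'I_nn, g1 x = y.
  move=> y; rewrite img1; split; by move=> [x <-]; exists x.
have img2' : forall y, (y \in D2) <-> exists x : 'I_nn, g2 x = y.
  move=> y; rewrite img2; split; by move=> [x <-]; exists x.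
have inj1' : injective g1 by [].
have inj2' : injective g2 by [].
clearbody g1 g2; clear inj1 inj2 img1 img2 ord1' ord2' f1 f2.
rename g1 into f1. rename g2 into f2. rename inj1' into inj1. rename inj2' into inj2.
rename img1' into img1. rename img2' into img2.
have img1' : forall y, y \in D1 -> exists x : 'I_nn, f1 x = y by move=> y /img1.
have img2' : forall y, y \in D2 -> exists x : 'I_nn, f2 x = y by move=> y /img2.
pose K1 := [set f1 x | x in [set x : 'I_nn | x < mm]].
pose K2 := [set f2 x | x in [set x : 'I_nn | 1 <= x]].
have cK1 : #|K1| = mm.
  rewrite card_imset //; apply: card_lt; rewrite /= /nn /mm; lia.
have cK2 : #|K2| = mm.
  rewrite card_imset //.
  have -> : [set x : 'I_nn | 1 <= x] = [set x : 'I_nn | 1 <= x < nn].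
    by apply/setP => x; rewrite !inE ltn_ord andbT.
  rewrite card_int // /nn /mm; lia.
have o0 : 0 < nn by rewrite /nn.
have o1l : 1 < nn by rewrite /nn.
pose r := f1 (Ordinal o0).
pose q := Ordinal o1l.
have rK1 : forall u, u \in K1 -> @ple Q r u.
  move=> u /imsetP[t]; rewrite inE => tm ->; rewrite -ord1 /glen /=; lia.
have K1D1 : forall u, u \in K1 -> u \in D1.
  by move=> u /imsetP[t _ ->]; apply/img1; exists t.
have K1dc : forall u w, @ple Q w u -> u \in K1 -> w \in K1.
  move=> u w wu uK; have := K1D1 u uK; case/imsetP: uK => t; rewrite inE => tm ut uD.
  have [t' wt] := img1' w (Dd1 u w wu uD).
  apply/imsetP; exists t'; rewrite ?inE; last by [].
  have : glen nn mm false t' t by rewrite ord1 wt -ut.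
  move/glen_le; lia.
have disj : K1 :&: K2 = set0.
  apply/setP => z; rewrite inE [z \in set0]inE; apply/negP => /andP[zK1 zK2].
  have [t1 t1m z1] := imsetP zK1; rewrite inE in t1m.
  have [t2 t2p z2] := imsetP zK2; rewrite inE in t2p.
  have rz : @ple Q r z by rewrite z1 -ord1 /glen /=; lia.
  have rD2 : r \in D2 by apply: (Dd2 z) rz _; apply/img2; exists t2.
  have [w rw] := img2' r rD2.
  have w1 : 1 <= w.
    have : glen nn 1 true w t2 by rewrite ord2 rw -z2.
    rewrite /glen; lia.
  have qr : @ple Q (f2 q) r by rewrite -rw -ord2 /glen /=; unfold nn in *; lia.
  have qD1 : f2 q \in D1 by apply: (Dd1 r) qr _; apply/img1; exists (Ordinal o0).
  have [u qu] := img1' _ qD1.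
  have u0 : u = Ordinal o0.
    apply/val_inj => /=; have : glen nn mm false u (Ordinal o0) by rewrite ord1 qu.
    move/glen_le => /=; lia.
  have rq : r = f2 q by rewrite /r -u0 qu.
  have nlt : nn.-2 < nn by rewrite /nn.
  have nlt' : nn.-1 < nn by rewrite /nn.
  have [x0 Px0] : exists x0 : 'I_nn, (1 <= x0) && (f2 x0 \notin K1).
    case: (boolP (f2 (Ordinal nlt) \in K1)) => aK; last first.
      by exists (Ordinal nlt); rewrite aK andbT /= /nn; lia.
    case: (boolP (f2 (Ordinal nlt') \in K1)) => bK; last first.
      by exists (Ordinal nlt'); rewrite bK andbT /= /nn; lia.
    exfalso.
    case/imsetP: aK => ua; rewrite inE => uam ea.
    case/imsetP: bK => ub; rewrite inE => ubm eb.
    case: (leqP ua ub) => uab.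
      have : glen nn 1 true (Ordinal nlt) (Ordinal nlt') by rewrite ord2 ea eb -ord1 /glen; lia.
      rewrite /glen /= /nn; lia.
    have : glen nn 1 true (Ordinal nlt') (Ordinal nlt) by rewrite ord2 ea eb -ord1 /glen; lia.
    rewrite /glen /= /nn; lia.
  case: (@arg_minnP _ x0 (fun x : 'I_nn => (1 <= x) && (f2 x \notin K1)) val Px0) => x /andP[x1 xK] minx.
  pose e := f2 x.
  pose D := K1 :|: [set e].
  have Dd : is_downset D.
    move=> uu ww wu; rewrite !inE => /orP[uK|/eqP ue].
      by rewrite (K1dc uu ww wu uK).
    have uD2 : uu \in D2 by apply/img2; exists x.
    have [t wt] := img2' ww (Dd2 uu ww wu uD2).
    have : glen nn 1 true t x by rewrite ord2 wt; move: wu; rewrite ue.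
    case: (eqVneq t x) => [tx _|tx]; first by rewrite -wt tx /e eqxx orbT.
    move=> gtx; apply/orP; left; rewrite -wt.
    apply: contraNT tx => tK; apply/eqP/val_inj/eqP; rewrite eqn_leq; apply/andP; split.
      exact: glen_le gtx.
    by apply: minx; rewrite tK andbT; move: gtx x1; rewrite /glen; lia.
  have cD : #|D| = nn by rewrite /D setUC cardsU1 (negbTE xK) cK1 /nn /mm; lia.
  have [i [h [hinj himg hord]]] := H1 D Dd cD.
  have rK : r \in K1 by apply/imsetP; exists (Ordinal o0); rewrite ?inE.
  have rD : r \in D by rewrite !inE rK.
  have [x0' hx0] := (himg r).1 rD.
  have rle : forall uu, uu \in D -> @ple Q r uu.
    move=> uu; rewrite !inE => /orP[/rK1 //|/eqP ->].
    rewrite rq /e -ord2 /glen /=; move: x1; unfold nn in *; lia.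
  have ip := ltn_ord i.
  apply: (@noleast nn (ga i) (p.+1 <= i) x0').
    rewrite /ga; case: ifP => _; rewrite /nn; lia.
  move=> y; have := hord x0' y; rewrite /= => ->; rewrite hx0; apply: rle.
  by apply/himg; exists y.
have := subset_leq_card (subsetT (K1 :|: K2)).
rewrite cardsU disj cards0 cK1 cK2 cardsT card_ord; lia.
Qed.
End Constr.

Theorem mainTheorem3 :
  forall c : nat, exists (n k : nat) (Gamma : 'I_k -> fposet),
    covtree_node n Gamma /\
    forall Q : fposet, witness n Gamma Q -> n + k + c < pcard Q.
Proof.
move=> c.
have p1 : 1 <= c + 3 by lia.
exists (nn (c + 3)), (c + 3).+2, (@Gam (c + 3)); split.
  split => //.
  - move=> i j; exact: (@distinct (c + 3) p1 i j).
  - exists (QQ (c + 3)); split.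
      by move=> D Dd Dn; apply: classify.
    exact: realize.
move=> Q /(lower p1); rewrite /nn /mm; lia.
Qed.
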